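(* Let $C$ be an étale topological category. The map $\omega\colon C\to\mathsf{C}(\Omega(C))$, $\omega(x)=O_x$, where $O_x$ is the set of all open subsets of $C$ containing $x$, is a continuous covering functor.
   Context: Étale topological category: a small category $C$ (arrows, identities $C_o$, domain/codomain maps $\mathbf{d},\mathbf{r}$, $ab$ defined iff $\mathbf{d}(a)=\mathbf{r}(b)$) with a topology making $\mathbf{d}$, $\mathbf{r}$ and the multiplication (on composable pairs, subspace of the product) continuous, with $\mathbf{d},\mathbf{r}$ local homeomorphisms. $\Omega(C)$ is the set of open subsets of $C$ ordered by inclusion, with product $UV=\{uv:u\in U,v\in V,\mathbf{d}(u)=\mathbf{r}(v)\}$, identity $C_o$, $U^{\ast}=\mathbf{d}(U)$, $U^{+}=\mathbf{r}(U)$; it is a restriction quantal frame. For a restriction quantal frame $Q$ (with these operations), $\mathsf{C}(Q)$ is the category of completely prime filters of $Q$ (nonempty, upward closed, closed under binary meets, not containing $0$, and containing some $a_i$ whenever it contains $\bigvee_i a_i$), with $\mathbf{d}(A)=\{x:\exists a\in A,\ a^{\ast}\le x\}$, $\mathbf{r}(A)=\{x:\exists a\in A,\ a^{+}\le x\}$, $A\cdot B=\{x:\exists a\in A,b\in B,\ ab\le x\}$ defined iff $\mathbf{d}(A)=\mathbf{r}(B)$, and topology with base the sets $\mathscr{X}_a=\{A:a\in A\}$, $a$ a partial isometry ($a$ with $b\le a\Rightarrow b=b^{+}a=ab^{\ast}$). A covering functor is a functor $F$ that is $\mathbf{d}$-injective ($F(x)=F(y)$, $\mathbf{d}(x)=\mathbf{d}(y)\Rightarrow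 x=y$), $\mathbf{d}$-surjective (if $F(e)=\mathbf{d}(y)$ for an identity $e$, there is $x$ with $\mathbf{d}(x)=e$ and $F(x)=y$), and similarly $\mathbf{r}$-injective and $\mathbf{r}$-surjective. *)

(* Defs.v *)
From HB Require Import structures.
From mathcomp Require Import all_boot all_order.
From mathcomp Require Import boolp classical_sets topology.
Set Implicit Arguments. Unset Strict Implicit. Unset Printing Implicit Defensive.
Local Open Scope classical_set_scope.

Section Etale.
Variable X : topologicalType.
Variables (d r : X -> X) (mul : X -> X -> X).

(* Small category presented by its arrows: identities are the x with d x = x;
   [mul a b] is the composite ab, meaningful when d a = r b. *)
Definition is_category : Prop :=
  (forall x, d (d x) = d x) /\ (forall x, r (d x) = d x) /\
  (forall x, d (r x) = r x) /\ (forall x, r (r x) = r x) /\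
  (forall a b, d a = r b -> d (mul a b) = d b /\ r (mul a b) = r a) /\
  (forall a b c, d a = r b -> d b = r c -> mul (mul a b) c = mul a (mul b c)) /\
  (forall x, mul x (d x) = x) /\ (forall x, mul (r x) x = x).

Definition identities : set X := [set e | d e = e].

Definition local_homeo (f : X -> X) : Prop :=
  forall x, exists U : set X,
    open U /\ U x /\ open (f @` U) /\ {in U &, injective f} /\
        (forall V, open V -> V `<=` U -> open (f @` V)) /\
        {within U, continuous f}.

Definition etale_category : Prop :=
  is_category /\ continuous d /\ continuous r /\
  {within [set p : X * X | d p.1 = r p.2], continuous (fun p => mul p.1 p.2)} /\
  local_homeo d /\ local_homeo r.

(* The quantale Omega(C): elements are the open subsets of X. *)
Definition Omul (U V : set X) : set X :=
  [set z | exists u v, [/\ U u, V v, d u = r v & z = mul u v]].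
Definition Ostar (U : set X) : set X := d @` U.
Definition Oplus (U : set X) : set X := r @` U.

Definition partial_isometry (a : set X) : Prop :=
  open a /\ forall b, open b -> b `<=` a ->
    b = Omul (Oplus b) a /\ b = Omul a (Ostar b).

Definition cp_filter (F : set (set X)) : Prop :=
  (forall U, F U -> open U) /\
      (exists U, F U) /\
      (forall U V, F U -> open V -> U `<=` V -> F V) /\
      (forall U V, F U -> F V -> F (U `&` V)) /\
      ~ F set0 /\
      (forall S : set (set X), (forall U, S U -> open U) ->
          F (\bigcup_(U in S) U) -> exists2 U, S U & F U).

Definition Cd (A : set (set X)) : set (set X) :=
  [set x | open x /\ exists2 a, A a & Ostar a `<=` x].
Definition Cr (A : set (set X)) : set (set X) :=
  [set x | open x /\ exists2 a, A a & Oplus a `<=` x].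
Definition Cmul (A B : set (set X)) : set (set X) :=
  [set x | open x /\ exists a b, [/\ A a, B b & Omul a b `<=` x]].

(* topology on C(Omega(C)) with base the sets X_a, a a partial isometry:
   W is open iff every point of W lies in some basic X_a contained in W. *)
Definition C_open (W : set (set (set X))) : Prop :=
  (forall A, W A -> cp_filter A) /\
  (forall A, W A -> exists a, [/\ partial_isometry a, A a &
       forall B, cp_filter B -> B a -> W B]).

Definition omega (x : X) : set (set X) := [set U | open U /\ U x].

End Etale.

(* Main.v *)
Require Import Defs.
From HB Require Import structures.
From mathcomp Require Import all_boot all_order.
From mathcomp Require Import boolp classical_sets topology.
Local Open Scope classical_set_scope.
Set Implicit Arguments.

Section S.
Variable X : topologicalType.

Lemma omega_cp (x : X) : cp_filter (omega x).
Proof.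
split; first by move=> U [].
split; first by exists setT; split => //; exact: openT.
split; first by move=> U V [_ Ux] oV UV; split => //; exact: UV.
split; first by move=> U V [oU Ux] [oV Vx]; split => //; exact: openI.
split; first by case.
move=> S oS [_ [U SU Ux]]; by exists U => //; split => //; exact: oS.
Qed.

Lemma omega_fun (f : X -> X) (x : X) : continuous f ->
  omega (f x) = [set V | open V /\ exists2 a, omega x a & f @` a `<=` V].
Proof.
move=> cf; rewrite eqEsubset; split => V.
- move=> [oV Vfx]; split => //; exists (f @^-1` V).
    by split => //; move/continuousP: cf; apply.
  by move=> z [w Vw <-].
- move=> [oV [a [oa ax] fa]]; split => //; apply: fa; by exists x.
Qed.

Lemma lh_inj (f : X -> X) : local_homeo f ->
  forall x y, omega x = omega y -> f x = f y -> x = y.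
Proof.
move=> lh x y exy fxy; have [U [oU [Ux [_ [inj _]]]]] := lh x.
have : omega y U by rewrite -exy.
case=> _ Uy; apply: inj => //; rewrite inE //.
Qed.

Lemma lh_surj (f : X -> X) : local_homeo f -> forall e B, cp_filter B ->
  omega e = [set V | open V /\ exists2 a, B a & f @` a `<=` V] ->
  exists x, f x = e /\ omega x = B.
Proof.
move=> lh e B [Bo [[U0 BU0] [Bup [BI [B0 Bcp]]]]] eB.
pose S := [set U : set X | open U /\ {in U &, injective f} /\
   (forall V, open V -> V `<=` U -> open (f @` V))].
have BT : B (\bigcup_(U in S) U).
  apply: (Bup U0) => //; last by move=> z _; have [U [oU [Uz [_ [inj [op _]]]]]] := lh z;
     exists U => //.
  apply: bigcup_open => U [] //.
have [U [oU [inj op]] BU] := Bcp S (fun U SU => SU.1) BT.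
have : omega e (f @` U) by rewrite eB; split; [exact: op | exists U].
case=> _ [x Ux fxe]; exists x; split => //.
rewrite eqEsubset; split => V.
- case=> oV Vx.
  have oVU : open (V `&` U) by exact: openI.
  have : omega e (f @` (V `&` U)).
    split; first by apply: op => // z [].
    by exists x.
  rewrite eB; case=> _ [a Ba fa].
  apply: (Bup (a `&` U)) => //; first exact: BI.
  move=> z [az Uz]; have [z' [Vz' Uz'] fz] := fa _ (ex_intro2 _ _ z az erefl).
  have -> : z = z' by apply: inj; rewrite ?inE.
  done.
- move=> BV; have oV := Bo _ BV.
  have BVU := BI _ _ BV BU.
  have : (Cd f B) (f @` (V `&` U)).
    split; first by apply: op; [exact: openI | by move=> z []].
    by exists (V `&` U).
  rewrite /Cd -eB; case=> _ [x' [Vx' Ux'] fx'].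
  split => //; have -> : x = x' by apply: inj; rewrite ?inE // fx'.
  done.
Qed.
Lemma omega_mul (d r : X -> X) (mul : X -> X -> X) x y :
  {within [set p : X * X | d p.1 = r p.2], continuous (fun p => mul p.1 p.2)} ->
  d x = r y -> omega (mul x y) = Cmul d r mul (omega x) (omega y).
Proof.
move=> cm dxy; rewrite eqEsubset; split => V.
- case=> oV Vxy; split => //.
  have nV : nbhs (mul x y) V by apply: open_nbhs_nbhs.
  have := cm ((x, y) : subspace [set p : X * X | d p.1 = r p.2]) _ nV.
  move=> H; have := H; rewrite /= /nbhs /= -nbhs_subspace_in //.
  case=> -[Q R] /= [nQ nR] sub.
  move: nQ; rewrite nbhsE => -[a [oa ax] aQ].
  move: nR; rewrite nbhsE => -[b [ob yb] bR].
  exists a, b; split => //.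
  move=> z [u [v [au bv duv ->]]].
  exact: (sub (u, v) (conj (aQ _ au) (bR _ bv)) duv).
- case=> oV [a [b [[oa ax] [ob yb] sub]]]; split => //.
  by apply: sub; exists x, y.
Qed.
End S.

Theorem mainTheorem15 (X : topologicalType) (d r : X -> X) (mul : X -> X -> X) :
  etale_category d r mul ->
  (forall x, @cp_filter X (omega x)) /\
  (forall x, omega (d x) = Cd d (omega x)) /\
  (forall x, omega (r x) = Cr r (omega x)) /\
  (forall x y, d x = r y -> omega (mul x y) = Cmul d r mul (omega x) (omega y)) /\
  (forall W, C_open d r mul W -> open [set x : X | W (omega x)]) /\
  (forall x y, omega x = omega y -> d x = d y -> x = y) /\
  (forall e, d e = e -> forall B, @cp_filter X B -> omega e = Cd d B ->
     exists x, d x = e /\ omega x = B) /\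
  (forall x y, omega x = omega y -> r x = r y -> x = y) /\
  (forall e, d e = e -> forall B, @cp_filter X B -> omega e = Cr r B ->
     exists x, r x = e /\ omega x = B).
Proof.
move=> [_ [cd [cr [cm [lhd lhr]]]]].
split; first exact: omega_cp.
split; first by move=> x; exact: omega_fun.
split; first by move=> x; exact: omega_fun.
split; first by move=> x y; exact: omega_mul.
split.
  move=> W [_ HW]; rewrite openE => x Wx.
  have [a [_ ax HB]] := HW _ Wx.
  rewrite /interior nbhsE; exists a; first exact: ax.
  move=> z az; apply: HB; first exact: omega_cp.
  by split => //; case: ax.
split; first exact: lh_inj.
split; first by move=> e _ B cB eB; exact: lh_surj.
split; first exact: lh_inj.
by move=> e _ B cB eB; exact: lh_surj.
Qed.
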